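(* Let $z\in\mathcal F_\infty$. If $v,w\in\mathcal A_{\mathrm{FPF}}(z)$ and $v<_{\mathcal A}w$, then $\lambda(v)<\lambda(w)$ in the dominance order.
   Context: Let $S_\infty$ be the group of finitely supported permutations of $\mathbb P$, and let $\ell(w)$ be the number of inversions of $w$. Let $\Theta(i)=i-(-1)^i$ and $\mathcal F_\infty=\{w^{-1}\Theta w:w\in S_\infty\}$. Let $\mathcal A_{\mathrm{FPF}}(z)$ be the set of minimal-length $w$ with $z=w^{-1}\Theta w$. Define $<_{\mathcal A}$ on $S_\infty$ as the transitive relation generated by the following rule. Set $v<_{\mathcal A}w$ when the one-line representation of $w^{-1}$ is obtained from that of $v^{-1}$ by replacing a consecutive subsequence $a\,d\,b\,c$, beginning at an odd position and with $a<b<c<d$, by $b\,c\,a\,d$. The code of $w\in S_\infty$ is $c(w)=(c_1,c_2,\dots)$ with $c_i=\#\{j>i:w(j)<w(i)\}$. The shape $\lambda(w)$ is the partition obtained by sorting $c(w)$. *)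

(* Defs.v *)
(* Permutations of P = {1,2,...} are encoded as functions
   nat -> nat fixing 0; index 0 is a dummy point. *)
From Stdlib Require Import Relations.
From mathcomp Require Import all_boot.
Set Implicit Arguments. Unset Strict Implicit. Unset Printing Implicit Defensive.

Definition Theta (i : nat) : nat :=
  if i == 0 then 0 else if odd i then i.+1 else i.-1.

Definition fin_perm (w : nat -> nat) : Prop :=
  w 0 = 0 /\ bijective w /\ exists N, forall i, N < i -> w i = i.

Definition fpf_conj (w z : nat -> nat) : Prop :=
  exists winv, cancel w winv /\ cancel winv w /\
    forall i, z i = winv (Theta (w i)).

Definition in_Finf (z : nat -> nat) : Prop :=
  exists w, fin_perm w /\ fpf_conj w z.

Definition inv_upto (n : nat) (w : nat -> nat) : nat :=
  \sum_(1 <= i < n.+1) \sum_(i.+1 <= j < n.+1) (w j < w i : nat).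

Definition inv_len (w : nat -> nat) (k : nat) : Prop :=
  exists N, forall n, N <= n -> inv_upto n w = k.

Definition A_FPF (z v : nat -> nat) : Prop :=
  fin_perm v /\ fpf_conj v z /\
  forall u, fin_perm u -> fpf_conj u z ->
    forall kv ku, inv_len v kv -> inv_len u ku -> kv <= ku.

(* generating step of <_A: the one-line representation of w^{-1} is obtained
   from that of v^{-1} by replacing a d b c at positions i..i+3 (i odd,
   a<b<c<d) by b c a d. *)
Definition A_step (v w : nat -> nat) : Prop :=
  exists (vi wi : nat -> nat) (i : nat),
    [/\ cancel v vi, cancel vi v, cancel w wi & cancel wi w] /\
    odd i /\
    (let a := vi i in let d := vi i.+1 in let b := vi i.+2 in let c := vi i.+3 in
     [/\ a < b, b < c & c < d] /\
     [/\ wi i = b, wi i.+1 = c, wi i.+2 = a & wi i.+3 = d]) /\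
    (forall j, (j < i) || (i.+3 < j) -> wi j = vi j).

Definition ltA (v w : nat -> nat) : Prop := clos_trans (nat -> nat) A_step v w.

Definition code_upto (n : nat) (w : nat -> nat) : seq nat :=
  [seq \sum_(i.+1 <= j < n.+1) (w j < w i : nat) | i <- iota 1 n].

Definition lam_shape (w : nat -> nat) (lam : seq nat) : Prop :=
  exists N, forall n, N <= n ->
    lam = filter (fun x => x != 0) (sort geq (code_upto n w)).

Definition dom_le (lam mu : seq nat) : Prop :=
  sumn lam = sumn mu /\ forall k, sumn (take k lam) <= sumn (take k mu).

Definition dom_lt (lam mu : seq nat) : Prop := dom_le lam mu /\ lam <> mu.

(* Main.v *)
Require Import Defs.
From Stdlib Require Import Relations.
From Stdlib Require Import Relations.
From mathcomp Require Import all_boot zify.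
Set Implicit Arguments. Unset Strict Implicit.

Ltac bcases := repeat match goal with
 | |- context [?x < ?y] => case: (ltnP x y) => ?
 | |- context [?x == ?y :> nat] => case: (@eqP _ x y) => ?
 end.

Lemma sum_ind (r : seq nat) p K : uniq r -> p \in r ->
  \sum_(i <- r) (if i == p then K else 0) = K.
Proof.
move=> ur pr; rewrite (bigD1_seq p) //= eqxx big1 ?addn0 // => i /negbTE ->; done.
Qed.

Lemma sum2 (r : seq nat) (F G : nat -> nat) p q : uniq r -> p \in r -> q \in r -> p != q ->
  (forall i, i != p -> i != q -> F i = G i) ->
  \sum_(i <- r) F i + G p + G q = \sum_(i <- r) G i + F p + F q.
Proof.
move=> ur pr qr npq FG.
have key : forall i, F i + (if i == p then G p else 0) + (if i == q then G q else 0)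
  = G i + (if i == p then F p else 0) + (if i == q then F q else 0).
  move=> i; case: (i =P p) => ip; case: (i =P q) => iq.
  - by move: npq; rewrite -ip -iq eqxx.
  - by rewrite ip /=; lia.
  - by rewrite iq /=; lia.
  - rewrite FG; [lia | by apply/eqP | by apply/eqP].
have E : \sum_(i <- r) (F i + (if i == p then G p else 0) + (if i == q then G q else 0))
  = \sum_(i <- r) (G i + (if i == p then F p else 0) + (if i == q then F q else 0)).
  by apply: eq_bigr => i _; exact: key i.
by move: E; rewrite !big_split /= !sum_ind.
Qed.

Definition cnt (r : seq nat) (f : nat -> nat) (m : nat) := \sum_(i <- r) (m < f i : nat).

Lemma transfer (r : seq nat) (f g : nat -> nat) p q M : uniq r -> p \in r -> q \in r -> p != q ->
  (forall i, i != p -> i != q -> g i = f i) ->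
  g p = (f p).+1 -> f q = (g q).+1 -> g q <= f p -> f p < M ->
  [/\ \sum_(i <- r) g i = \sum_(i <- r) f i,
      \sum_(i <- r) (f i * f i) + 2 * (f p - g q) <= \sum_(i <- r) (g i * g i) &
      forall k, \sum_(0 <= m < M) minn k (cnt r f m) <= \sum_(0 <= m < M) minn k (cnt r g m)].
Proof.
move=> ur pr qr npq gf gp fq gqfp fpM.
have gf' : forall i, i != p -> i != q -> f i = g i by move=> i h1 h2; rewrite gf.
split.
- have := sum2 ur pr qr npq gf'. lia.
- have := sum2 ur pr qr npq (F := fun i => f i * f i) (G := fun i => g i * g i)
    (fun i h1 h2 => congr1 (fun x => x * x) (gf' i h1 h2)). 
  rewrite gp fq; nia.
move=> k.
have cm : forall m, cnt r g m + (m < f p) + (m < f q) = cnt r f m + (m < g p) + (m < g q).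
  move=> m; rewrite /cnt.
  apply: (sum2 (F := fun i => (m < g i : nat)) (G := fun i => (m < f i : nat)) ur pr qr npq).
  by move=> i h1 h2; rewrite gf.
set a := f p; set b := g q.
have [eab|nab] := eqVneq a b.
  apply: eq_leq; apply: eq_bigr => m _; congr minn.
  have := cm m; rewrite gp fq -/a -/b eab.
  bcases => /=; lia.
have ba : b < a by rewrite ltn_neqAle eq_sym nab gqfp.
have aM : a \in index_iota 0 M by rewrite mem_index_iota.
have bM : b \in index_iota 0 M by rewrite mem_index_iota; lia.
have := sum2 (iota_uniq _ _) aM bM nab
  (F := fun m => minn k (cnt r f m)) (G := fun m => minn k (cnt r g m)).
have -> : index_iota 0 M = iota 0 M by rewrite /index_iota subn0.
move=> /(_ _) H.
have H' : forall i, i != a -> i != b -> minn k (cnt r f i) = minn k (cnt r g i).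
  move=> i ia ib; congr minn; have := cm i; rewrite gp fq -/a -/b.
  move: ia ib => /eqP ia /eqP ib.
  bcases => /=; lia.
have {}H := H H'.
have ca := cm a; have cb := cm b; rewrite gp fq -/a -/b in ca cb.
have cab : cnt r f a + 1 <= cnt r f b.
  rewrite /cnt -(@sum_ind r p 1 ur pr) -big_split /=; apply: leq_sum => i _.
  case: (i =P p) => [->|_]; rewrite -/a; first by rewrite ltnn ba.
  rewrite addn0; bcases => //=; lia.
rewrite ?/index_iota ?subn0; rewrite ?subn0 in H.
move: H ca cb cab; bcases; lia.
Qed.
Lemma sum_lt M x : \sum_(0 <= m < M) (m < x : nat) = minn x M.
Proof.
elim: M => [|M IH]; first by rewrite big_geq // minn0.
rewrite big_nat_recr //= IH; case: ltnP => h /=; lia.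
Qed.

Lemma geq_trans : transitive geq.
Proof. move=> a b c /= h1 h2; exact: leq_trans h2 h1. Qed.

Lemma Q_sorted (u : seq nat) M k : sorted geq u -> all (fun x => x <= M) u ->
  sumn (take k u) = \sum_(0 <= m < M) minn k (count (fun x => m < x) u).
Proof.
elim: u k => [|x u IH] k /=.
  by move=> _ _; rewrite big1 // => m _; rewrite minn0.
move=> sp /andP [xM aM].
have su := path_sorted sp.
have ax := order_path_min geq_trans sp.
case: k => [|k].
  by rewrite /= big1 // => m _; rewrite min0n.
rewrite /= (IH k su aM).
have E : forall m, minn k.+1 ((m < x) + count (fun y => m < y) u) = (m < x) + minn k (count (fun y => m < y) u).
  move=> m; case: (ltnP m x) => h /=.
    by rewrite add1n minnSS.
  have -> : count (fun y => m < y) u = 0.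
    rewrite (eq_in_count (a2 := pred0)) ?count_pred0 // => y yu /=.
    have := allP ax y yu; rewrite /= => hy; apply/negbTE; rewrite -leqNgt; exact: leq_trans hy h.
  by rewrite minn0.
rewrite (eq_bigr _ (fun m _ => E m)) big_split /= sum_lt.
by rewrite (minn_idPl xM).
Qed.

Lemma count_cnt (r : seq nat) f m : count (fun x => m < x) (map f r) = \sum_(i <- r) (m < f i : nat).
Proof. by elim: r => [|y r IH]; rewrite ?big_nil ?big_cons //= IH. Qed.

Lemma sumn_map (r : seq nat) f : sumn (map f r) = \sum_(i <- r) f i.
Proof. by elim: r => [|y r IH]; rewrite ?big_nil ?big_cons //= IH. Qed.

Lemma P_map (r : seq nat) f M k : all (fun i => f i <= M) r ->
  sumn (take k (sort geq (map f r))) = \sum_(0 <= m < M) minn k (\sum_(i <- r) (m < f i : nat)).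
Proof.
move=> ar.
have pe := perm_sort geq (map f r).
rewrite (@Q_sorted _ M k (sort_sorted (fun a b => leq_total b a) _)).
  apply: eq_bigr => m _; congr minn; rewrite -count_cnt.
  have P : perm_eq (sort geq (map f r)) (map f r) by rewrite perm_sort.
  exact: (permP P).
have P : perm_eq (sort geq (map f r)) (map f r) by rewrite perm_sort.
rewrite (perm_all _ P) all_map; exact: ar.
Qed.

Definition sumsq (s : seq nat) := sumn (map (fun x => x * x) s).

Lemma filter_take (u : seq nat) k : sorted geq u ->
  sumn (take k (filter (fun x => x != 0) u)) = sumn (take k u).
Proof.
elim: u k => [|x u IH] k //= sp.
have su := path_sorted sp.
have ax := order_path_min geq_trans sp.
case: eqP => [x0|_]; last first.
  by case: k => [|k] //=; rewrite IH.
subst x; have z : forall y, y \in u -> y = 0.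
  by move=> y yu; have := allP ax y yu; rewrite /=; lia.
transitivity 0.
  rewrite (@eq_in_filter _ _ pred0) ?filter_pred0 // => y yu /=.
  by rewrite (z y yu).
case: k => [|k] //=; elim: u z {IH sp su ax} k => [|y u IH] z k; first by case: k.
case: k => //= k; rewrite (z y) ?mem_head // add0n; apply: IH => t tu; apply: z.
by rewrite in_cons tu orbT.
Qed.

Lemma filter_sumn (u : seq nat) : sumn (filter (fun x => x != 0) u) = sumn u.
Proof. by elim: u => //= x u IH; case: eqP => [->|_] //=; rewrite IH. Qed.

Lemma filter_sumsq (u : seq nat) : sumsq (filter (fun x => x != 0) u) = sumsq u.
Proof. by rewrite /sumsq; elim: u => //= x u IH; case: eqP => [->|_] //=; rewrite IH. Qed.

Lemma sort_sumn (u : seq nat) : sumn (sort geq u) = sumn u.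
Proof. by apply: perm_sumn; rewrite perm_sort. Qed.

Lemma sort_sumsq (u : seq nat) : sumsq (sort geq u) = sumsq u.
Proof. by apply: perm_sumn; apply: perm_map; rewrite perm_sort. Qed.

Definition Rel (s t : seq nat) := [/\ sumn s = sumn t, sumsq s < sumsq t &
  forall k, sumn (take k (sort geq s)) <= sumn (take k (sort geq t))].

Lemma sumsq_map (r : seq nat) f : sumsq (map f r) = \sum_(i <- r) (f i * f i).
Proof. by rewrite /sumsq -map_comp sumn_map. Qed.

Lemma step_codes (f g : nat -> nat) n a b c :
  a \in iota 1 n -> b \in iota 1 n -> c \in iota 1 n -> a != b -> a != c -> b != c ->
  (forall i, i != a -> i != b -> i != c -> g i = f i) ->
  g a = (f a).+2 -> f b = (g b).+1 -> f c = (g c).+1 -> g b <= f a -> g c <= f a ->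
  (forall i, f i <= n) -> (forall i, g i <= n) ->
  Rel (map f (iota 1 n)) (map g (iota 1 n)).
Proof.
move=> ar br cr ab ac bc gf ga fb fc gbfa gcfa fn gn.
pose h := fun i => if i == a then (f a).+1 else if i == b then g b else f i.
have ur := iota_uniq 1 n.
have e1 : forall i, i != a -> i != b -> h i = f i.
  by move=> i ia ib; rewrite /h (negbTE ia) (negbTE ib).
have [s1 s2 s3] := @transfer _ f h a b n ur ar br ab e1
  ltac:(by rewrite /h eqxx) ltac:(by rewrite /h eq_sym (negbTE ab) eqxx fb)
  ltac:(by rewrite /h eq_sym (negbTE ab) eqxx) ltac:(by have := gn a; rewrite ga; lia).
have hc : h c = f c by rewrite /h eq_sym (negbTE ac) eq_sym (negbTE bc).
have ha : h a = (f a).+1 by rewrite /h eqxx.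
have e2 : forall i, i != a -> i != c -> g i = h i.
  by move=> i ia ic; rewrite /h (negbTE ia); case: eqP => [->|/eqP ib] //; rewrite gf.
have [t1 t2 t3] := @transfer _ h g a c n ur ar cr ac e2
  ltac:(by rewrite ha ga) ltac:(by rewrite hc fc) ltac:(by rewrite ha; lia) ltac:(by have := gn a; rewrite ha ga; lia).
split.
- by rewrite !sumn_map t1 s1.
- rewrite !sumsq_map; move: s2 t2; rewrite ha; lia.
- move=> k; rewrite (@P_map _ _ n k) ?(@P_map _ g n k); try (apply/allP => i _; done).
  exact: leq_trans (s3 k) (t3 k).
Qed.

Lemma sum_eqb (r : seq nat) x : uniq r -> x \in r -> \sum_(j <- r) (j == x : nat) = 1.
Proof.
move=> ur xr; rewrite -(@sum_ind r x 1 ur xr); apply: eq_bigr => j _; by case: eqP.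
Qed.

Lemma sum_range (F : nat -> nat) p q n : p <= q -> q <= n ->
  \sum_(q.+1 <= j < n.+1) F j <= \sum_(p.+1 <= j < n.+1) F j.
Proof.
move=> pq qn; rewrite (@big_cat_nat _ _ _ q.+1 p.+1 n.+1) //=; lia.
Qed.

Lemma sum_bound (B : nat -> bool) p n : \sum_(p.+1 <= j < n.+1) (B j : nat) <= n.
Proof.
apply: leq_trans (_ : \sum_(p.+1 <= j < n.+1) 1 <= _).
  by apply: leq_sum => j _; case: (B j).
rewrite sum_nat_const_nat; lia.
Qed.

Lemma step_rel v w : A_step v w -> v 0 = 0 ->
  w 0 = 0 /\ exists N, forall n, N <= n -> Rel (code_upto n v) (code_upto n w).
Proof.
case=> vi [wi [i [[cv1 cv2 cw1 cw2] [oi [[[ab bc cd] [w1 w2 w3 w4]] off]]]]] v0.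
set a := vi i in ab w3 *; set d := vi i.+1 in cd w4 *; set b := vi i.+2 in ab bc w1 *;
set c := vi i.+3 in bc cd w2 *.
have i1 : 0 < i by case: i oi {a b c d ab bc cd w1 w2 w3 w4 off}.
have va : v a = i by rewrite /a cv2.
have vb : v b = i.+2 by rewrite /b cv2.
have vc : v c = i.+3 by rewrite /c cv2.
have vd : v d = i.+1 by rewrite /d cv2.
have wa : w a = i.+2 by rewrite -w3 cw2.
have wb : w b = i by rewrite -w1 cw2.
have wc : w c = i.+1 by rewrite -w2 cw2.
have wd : w d = i.+3 by rewrite -w4 cw2.
have cl : forall p, (p = a /\ v p = i /\ w p = i.+2) \/ (p = b /\ v p = i.+2 /\ w p = i) \/
   (p = c /\ v p = i.+3 /\ w p = i.+1) \/ (p = d /\ v p = i.+1 /\ w p = i.+3) \/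
   (p <> a /\ p <> b /\ p <> c /\ p <> d /\ w p = v p /\ (v p < i \/ i.+3 < v p)).
  move=> p.
  have : v p < i \/ v p = i \/ v p = i.+1 \/ v p = i.+2 \/ v p = i.+3 \/ i.+3 < v p by lia.
  case=> [h|[h|[h|[h|[h|h]]]]].
  - have out : (v p < i) || (i.+3 < v p) by rewrite h.
    have wp : w p = v p by rewrite -[in LHS](cv1 p) -(off _ out) cw2.
    do 4 right; split; [move=> E; rewrite E va in h; lia|]; split; [move=> E; rewrite E vb in h; lia|].
    split; [move=> E; rewrite E vc in h; lia|]; split; [move=> E; rewrite E vd in h; lia|].
    split; [exact: wp | lia].
  - left; have pa : p = a by rewrite /a -h cv1.
    by rewrite pa va wa.
  - right; right; right; left; have pa : p = d by rewrite /d -h cv1.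
    by rewrite pa vd wd.
  - right; left; have pa : p = b by rewrite /b -h cv1.
    by rewrite pa vb wb.
  - right; right; left; have pa : p = c by rewrite /c -h cv1.
    by rewrite pa vc wc.
  - have out : (v p < i) || (i.+3 < v p) by rewrite h orbT.
    have wp : w p = v p by rewrite -[in LHS](cv1 p) -(off _ out) cw2.
    do 4 right; split; [move=> E; rewrite E va in h; lia|]; split; [move=> E; rewrite E vb in h; lia|].
    split; [move=> E; rewrite E vc in h; lia|]; split; [move=> E; rewrite E vd in h; lia|].
    split; [exact: wp | lia].
split.
  have vi0 : vi 0 = 0 by rewrite -[in LHS]v0 cv1.
  by rewrite -[in LHS]vi0 -off ?i1 // cw2.
have a1 : 0 < a by case: (a) va => //; rewrite v0; lia.
exists d => n dn.
rewrite /code_upto.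
pose f := fun p => \sum_(p.+1 <= j < n.+1) (v j < v p : nat).
pose g := fun p => \sum_(p.+1 <= j < n.+1) (w j < w p : nat).
have ir : forall x, 0 < x <= n -> x \in iota 1 n by move=> x hx; rewrite mem_iota; lia.
have ui : forall m, uniq (index_iota m.+1 n.+1) by move=> m; exact: iota_uniq.
have ir2 : forall x m, m < x <= n -> x \in index_iota m.+1 n.+1 by move=> x m hx; rewrite mem_index_iota; lia.
apply: (@step_codes f g n a b c).
- apply: ir; lia.
- apply: ir; lia.
- apply: ir; lia.
- apply/eqP; lia.
- apply/eqP; lia.
- apply/eqP; lia.
- move=> p /eqP pa /eqP pb /eqP pc; apply: eq_big_nat => j /andP [h1 h2].
  have := cl p; have := cl j; bcases; lia.
- rewrite /g /f.
  have E : \sum_(a.+1 <= j < n.+1) (w j < w a : nat) = \sum_(a.+1 <= j < n.+1) ((v j < v a : nat) + (j == b : nat) + (j == c : nat)).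
    apply: eq_big_nat => j /andP [h1 h2]; have := cl j; bcases; lia.
  rewrite E !big_split /= !sum_eqb //; [lia | apply: ir2; lia | apply: ir2; lia].
- rewrite /g /f.
  have E : \sum_(b.+1 <= j < n.+1) (v j < v b : nat) = \sum_(b.+1 <= j < n.+1) ((w j < w b : nat) + (j == d : nat)).
    apply: eq_big_nat => j /andP [h1 h2]; have := cl j; bcases; lia.
  rewrite E !big_split /= !sum_eqb //; [lia | apply: ir2; lia].
- rewrite /g /f.
  have E : \sum_(c.+1 <= j < n.+1) (v j < v c : nat) = \sum_(c.+1 <= j < n.+1) ((w j < w c : nat) + (j == d : nat)).
    apply: eq_big_nat => j /andP [h1 h2]; have := cl j; bcases; lia.
  rewrite E !big_split /= !sum_eqb //; [lia | apply: ir2; lia].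
- rewrite /g /f.
  have E : \sum_(b.+1 <= j < n.+1) (w j < w b : nat) = \sum_(b.+1 <= j < n.+1) (v j < v a : nat).
    apply: eq_big_nat => j /andP [h1 h2]; have := cl j; bcases; lia.
  rewrite E; apply: sum_range; lia.
- rewrite /g /f.
  have E : \sum_(c.+1 <= j < n.+1) (w j < w c : nat) = \sum_(c.+1 <= j < n.+1) (v j < v a : nat).
    apply: eq_big_nat => j /andP [h1 h2]; have := cl j; bcases; lia.
  rewrite E; apply: sum_range; lia.
- by move=> p; apply: sum_bound.
- by move=> p; apply: sum_bound.
Qed.

Lemma Rel_trans s t u : Rel s t -> Rel t u -> Rel s u.
Proof.
case=> a1 a2 a3 [b1 b2 b3]; split; first by rewrite a1.
- exact: ltn_trans a2 b2.
- by move=> k; exact: leq_trans (a3 k) (b3 k).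
Qed.

Lemma chain v w : ltA v w -> v 0 = 0 ->
  w 0 = 0 /\ exists N, forall n, N <= n -> Rel (code_upto n v) (code_upto n w).
Proof.
elim=> {v w} [x y st | x y z _ IH1 _ IH2] x0; first exact: step_rel.
have [y0 [N1 H1]] := IH1 x0; have [z0 [N2 H2]] := IH2 y0.
split=> //; exists (maxn N1 N2) => n hn.
apply: (@Rel_trans _ (code_upto n y)); [apply: H1 | apply: H2]; lia.
Qed.

Unset Implicit Arguments.
Theorem lemma3p29 (z v w : nat -> nat) :
  in_Finf z -> A_FPF z v -> A_FPF z w -> ltA v w ->
  forall lv lw, lam_shape v lv -> lam_shape w lw -> dom_lt lv lw.
Proof.
move=> _ [[v0 _] _] _ lt lv lw [Nv Hv] [Nw Hw].
have [_ [N HN]] := chain lt v0.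
pose n := maxn N (maxn Nv Nw).
have [r1 r2 r3] := HN n ltac:(rewrite /n; lia).
rewrite (Hv n ltac:(rewrite /n; lia)) (Hw n ltac:(rewrite /n; lia)).
have srt := fun s : seq nat => sort_sorted (fun a b => leq_total b a) s.
split; [split|].
- by rewrite !filter_sumn !sort_sumn r1.
- by move=> k; rewrite !filter_take ?srt //; exact: r3.
- move=> E; have := congr1 sumsq E; rewrite !filter_sumsq !sort_sumsq; lia.
Qed.
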